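(* Let $C$ be a nonempty proper subset of $V$ and $\lambda=d(\chi_C)$. Then $V^c_O\cap V^c_\lambda$ is contained in an affine subspace of $K$ of codimension $\kappa(C,V\setminus C)$. In particular, if $V^c_O\cap V^c_\lambda$ is a face of codimension one, then $\kappa(C,V\setminus C)=1$, i.e. the cut defined by $C$ is a bond.
   Context: $G=(V,E)$ is a finite connected graph; each edge gives oriented edges $e,\bar e$. Real $1$-cochains are $x$ on oriented edges with $x_{\bar e}=-x_e$, $\langle x,y\rangle=\sum_{e\in E}x_ey_e$, $q(x)=\langle x,x\rangle$. For $f:V\to\mathbb R$, $d(f)(e)=f(\text{head}(e))-f(\text{tail}(e))$; $K=d(\mathbb R^V)$ and $L=d(\mathbb Z^V)$. $V^c_\lambda=\{x\in K: q(x-\lambda)\le q(x-\mu)\ \forall\mu\in L\}$. $\chi_C$ is the characteristic function of $C$. If $G[C]$ has $k$ connected components and $G[V\setminus C]$ has $r$ connected components, the rank of the cut is $\kappa(C,V\setminus C)=k+r-1$; the cut is a bond when this rank is $1$. *)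

(* Defs.v *)
From HB Require Import structures.
From mathcomp Require Import all_boot all_order all_algebra.
Set Implicit Arguments. Unset Strict Implicit. Unset Printing Implicit Defensive.
Import Order.TTheory GRing.Theory Num.Theory.
Local Open Scope ring_scope.

(* A finite (multi)graph: vertex set 'I_n, edge set 'I_m; each edge e comes
   with a chosen orientation tl e -> hd e.  A real 1-cochain is identified with
   its values on the chosen orientations, i.e. with a row vector x : 'rV[R]_m
   (the value on the reversed edge is -x_e, implicitly). *)

Definition adj (n m : nat) (hd tl : 'I_m -> 'I_n) : rel 'I_n :=
  fun u v => [exists e : 'I_m, ((tl e == u) && (hd e == v)) || ((tl e == v) && (hd e == u))].

Definition connectedG (n m : nat) (hd tl : 'I_m -> 'I_n) : Prop :=
  forall u v : 'I_n, connect (adj hd tl) u v.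

Definition adj_in (n m : nat) (hd tl : 'I_m -> 'I_n) (C : {set 'I_n}) : rel 'I_n :=
  fun u v => [&& u \in C, v \in C & adj hd tl u v].

Definition ncomp_ind (n m : nat) (hd tl : 'I_m -> 'I_n) (C : {set 'I_n}) : nat :=
  n_comp (adj_in hd tl C) (mem C).

Definition cut_rank (n m : nat) (hd tl : 'I_m -> 'I_n) (C : {set 'I_n}) : nat :=
  (ncomp_ind hd tl C + ncomp_ind hd tl (~: C) - 1)%N.

Definition dmx (R : numDomainType) (n m : nat) (hd tl : 'I_m -> 'I_n) : 'M[R]_(n, m) :=
  \matrix_(i, e) ((hd e == i)%:R - (tl e == i)%:R).

Definition dcob (R : numDomainType) (n m : nat) (hd tl : 'I_m -> 'I_n) (f : 'I_n -> R) : 'rV[R]_m :=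
  \row_i f i *m dmx R hd tl.

Definition ip (R : numDomainType) (m : nat) (x y : 'rV[R]_m) : R := \sum_(e < m) x 0 e * y 0 e.
Definition qf (R : numDomainType) (m : nat) (x : 'rV[R]_m) : R := ip x x.

(* K = d(R^V) is the row space of dmx (x \in K iff (x <= dmx)%MS); L = d(Z^V). *)

Definition voronoi (R : realFieldType) (n m : nat) (hd tl : 'I_m -> 'I_n)
    (lam x : 'rV[R]_m) : Prop :=
  (x <= dmx R hd tl)%MS /\
  forall f : 'I_n -> int,
    qf (x - lam) <= qf (x - dcob hd tl (fun i => (f i)%:~R)).

Definition chi (R : numDomainType) (n : nat) (C : {set 'I_n}) : 'I_n -> R :=
  fun i => (i \in C)%:R.

Definition is_face (R : realFieldType) (m : nat) (P F : 'rV[R]_m -> Prop) : Prop :=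
  exists (a : 'rV[R]_m) (b : R),
    (forall x, P x -> ip a x <= b) /\ (forall x, F x <-> (P x /\ ip a x = b)).

Definition aff_indep_in (R : fieldType) (m r : nat) (F : 'rV[R]_m -> Prop) : Prop :=
  exists p0 : 'rV[R]_m, F p0 /\
    exists P : 'M[R]_(r, m), (forall i, F (p0 + row i P)) /\ \rank P = r.

Definition aff_dim (R : fieldType) (m r : nat) (F : 'rV[R]_m -> Prop) : Prop :=
  aff_indep_in r F /\ ~ aff_indep_in r.+1 F.

(* Main.v *)
Require Import Defs.
From HB Require Import structures.
From mathcomp Require Import all_boot all_order all_algebra.
From Stdlib Require Import Classical.
Import Order.TTheory GRing.Theory Num.Theory.
Set Implicit Arguments. Unset Strict Implicit. Unset Printing Implicit Defensive.
Lemma adj_sym n m (hd tl : 'I_m -> 'I_n) : symmetric (adj hd tl).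
Proof.
move=> u v; apply/existsP/existsP => -[e He]; exists e; by rewrite orbC.
Qed.

Lemma adj_in_sym n m (hd tl : 'I_m -> 'I_n) (C : {set 'I_n}) : symmetric (adj_in hd tl C).
Proof. by move=> u v; rewrite /adj_in adj_sym andbCA. Qed.

Lemma connect_in_mem n m (hd tl : 'I_m -> 'I_n) (C : {set 'I_n}) v w :
  connect (adj_in hd tl C) v w -> v \in C -> w \in C.
Proof.
case/connectP=> p; elim: p v => [|y p IH] v /=; first by move=> _ ->.
case/andP=> /and3P[_ yC _] pp wE _; exact: IH y pp wE yC.
Qed.

Definition rho n m (hd tl : 'I_m -> 'I_n) (C : {set 'I_n}) (v : 'I_n) :=
  if v \in C then fingraph.root (adj_in hd tl C) v else fingraph.root (adj_in hd tl (~: C)) v.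

Lemma rho_side n m (hd tl : 'I_m -> 'I_n) (C : {set 'I_n}) v : (rho hd tl C v \in C) = (v \in C).
Proof.
rewrite /rho; case: ifP => vC.
  exact: connect_in_mem (connect_root _ v) vC.
apply/negbTE; rewrite -in_setC; apply: connect_in_mem (connect_root _ v) _.
by rewrite in_setC vC.
Qed.

Lemma rho_idem n m (hd tl : 'I_m -> 'I_n) (C : {set 'I_n}) v : rho hd tl C (rho hd tl C v) = rho hd tl C v.
Proof.
have:= rho_side hd tl C v; rewrite /rho; case: ifP => vC ->; rewrite ?vC;
  apply: root_root; apply: sym_connect_sym; exact: adj_in_sym.
Qed.

Lemma rho_edge n m (hd tl : 'I_m -> 'I_n) (C : {set 'I_n}) e :
  (hd e \in C) = (tl e \in C) -> rho hd tl C (hd e) = rho hd tl C (tl e).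
Proof.
have adjht : adj hd tl (hd e) (tl e).
  by apply/existsP; exists e; rewrite !eqxx orbT.
move=> Hs; rewrite /rho -Hs; case: ifP => hC.
  apply/(fingraph.rootP (sym_connect_sym (adj_in_sym hd tl C))).
  by apply: connect1; rewrite /adj_in hC -Hs hC adjht.
apply/(fingraph.rootP (sym_connect_sym (adj_in_sym hd tl (~: C)))).
by apply: connect1; rewrite /adj_in !in_setC -Hs hC adjht.
Qed.

Lemma card_rho n m (hd tl : 'I_m -> 'I_n) (C : {set 'I_n}) :
  #|[set v | rho hd tl C v == v]| = (ncomp_ind hd tl C + ncomp_ind hd tl (~: C))%N.
Proof.
rewrite -(cardsID C) /ncomp_ind; congr (_ + _)%N; apply: eq_card => v;
  rewrite !inE /rho /roots; case: (v \in C) => //=; rewrite ?andbT ?andbF //.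
Qed.

Lemma ncomp_gt0 n m (hd tl : 'I_m -> 'I_n) (C : {set 'I_n}) : C != set0 -> (0 < ncomp_ind hd tl C)%N.
Proof.
case/set0Pn=> v vC; rewrite /ncomp_ind; apply/card_gt0P.
exists (fingraph.root (adj_in hd tl C) v); rewrite !inE /= roots_root /=.
  exact: connect_in_mem (connect_root _ v) vC.
exact/sym_connect_sym/adj_in_sym.
Qed.

Local Open Scope ring_scope.

Lemma sum_delta (R : numDomainType) n (F : 'I_n -> R) a :
  \sum_i F i * (a == i)%:R = F a.
Proof.
rewrite (bigD1 a) //= eqxx mulr1 big1 ?addr0 // => i /negPf.
by rewrite eq_sym => ->; rewrite mulr0.
Qed.

Lemma sum_delta' (R : numDomainType) n (F : 'I_n -> R) a :
  \sum_i F i * (i == a)%:R = F a.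
Proof. by rewrite -(sum_delta F a); apply: eq_bigr => i _; rewrite eq_sym. Qed.

Lemma mulD_entry (R : numDomainType) n m (hd tl : 'I_m -> 'I_n) (u : 'rV[R]_n) e :
  (u *m dmx R hd tl) 0 e = u 0 (hd e) - u 0 (tl e).
Proof.
rewrite mxE; under eq_bigr do rewrite mxE mulrBr.
by rewrite sumrB !sum_delta.
Qed.

Lemma dcob_entry (R : numDomainType) n m (hd tl : 'I_m -> 'I_n) (f : 'I_n -> R) e :
  dcob hd tl f 0 e = f (hd e) - f (tl e).
Proof. by rewrite /dcob mulD_entry !mxE. Qed.

Lemma ipC (R : numDomainType) m (x y : 'rV[R]_m) : ip x y = ip y x.
Proof. by apply: eq_bigr => e _; rewrite mulrC. Qed.

Lemma ipBl (R : numDomainType) m (x y z : 'rV[R]_m) : ip (x - y) z = ip x z - ip y z.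
Proof. by rewrite /ip -sumrB; apply: eq_bigr => e _; rewrite !mxE mulrBl. Qed.

Lemma ipZr (R : numDomainType) m (x y : 'rV[R]_m) c : ip x (c *: y) = c * ip x y.
Proof. by rewrite /ip mulr_sumr; apply: eq_bigr => e _; rewrite !mxE mulrCA. Qed.

Lemma qfZ (R : numDomainType) m (x : 'rV[R]_m) c : qf (c *: x) = c * c * qf x.
Proof.
by rewrite /qf /ip mulr_sumr; apply: eq_bigr => e _; rewrite !mxE mulrACA.
Qed.

Lemma qfB (R : numDomainType) m (x y : 'rV[R]_m) :
  qf (x - y) - qf x = qf y - ip x y *+ 2.
Proof.
rewrite /qf /ip -sumrMnl -!sumrB; apply: eq_bigr => e _; rewrite !mxE.
by rewrite -!expr2 sqrrB addrAC (addrAC (x 0 e ^+ 2)) subrr add0r addrC.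
Qed.

Lemma key_ineq (R : numDomainType) m (x lam mu : 'rV[R]_m) (s : R) :
  s * s = 1 -> ip lam mu = s * qf mu ->
  qf (x - 0) <= qf (x - s *: mu) ->
  qf (x - lam) <= qf (x - (lam - s *: mu)) ->
  ip x mu *+ 2 = s * qf mu.
Proof.
move=> ss Hlm H1 H2.
rewrite subr0 -subr_ge0 qfB qfZ ss mul1r ipZr subr_ge0 in H1.
have E : x - (lam - s *: mu) = (x - lam) - ((- s) *: mu).
  by rewrite scaleNr opprK opprB addrA addrAC.
rewrite E -subr_ge0 qfB qfZ mulrNN ss mul1r ipZr ipBl Hlm in H2.
rewrite mulNr mulrBr mulrA ss mul1r opprB opprK addrA [qf mu + _]addrC subrK addrA subr_ge0 -mulr2n in H2.
have Ht : (s * ip x mu) *+ 2 = qf mu by apply/le_anti; rewrite H1 H2.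
by rewrite -Ht -mulrnAr mulrA ss mul1r.
Qed.
Definition chiR (R : numDomainType) n m (hd tl : 'I_m -> 'I_n) (C : {set 'I_n}) (r : 'I_n) :
  'I_n -> R := fun v => (rho hd tl C v == r)%:R.

Definition sgn (R : numDomainType) n (C : {set 'I_n}) (r : 'I_n) : R :=
  if r \in C then 1 else -1.

Lemma edge_fact (R : numDomainType) n m (hd tl : 'I_m -> 'I_n) (C : {set 'I_n}) r :
  ip (dcob hd tl (chi R C)) (dcob hd tl (chiR R hd tl C r)) =
  sgn R C r * qf (dcob hd tl (chiR R hd tl C r)).
Proof.
rewrite /qf /ip mulr_sumr; apply: eq_bigr => e _; rewrite !dcob_entry /chi /chiR /sgn.
have F : [&& ((hd e \in C) == (tl e \in C)) ==> ((rho hd tl C (hd e) == r) == (rho hd tl C (tl e) == r)),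
   (rho hd tl C (hd e) == r) ==> ((r \in C) == (hd e \in C)) &
   (rho hd tl C (tl e) == r) ==> ((r \in C) == (tl e \in C))].
  apply/and3P; split.
  - by apply/implyP => /eqP /rho_edge ->.
  - by apply/implyP => /eqP <-; rewrite rho_side.
  - by apply/implyP => /eqP <-; rewrite rho_side.
move: F; case: (hd e \in C); case: (tl e \in C); case: (r \in C);
  case: (rho hd tl C (hd e) == r); case: (rho hd tl C (tl e) == r) => //= _;
  rewrite ?subrr ?subr0 ?sub0r ?mulr0 ?mul0r ?mulr1 ?mul1r ?mulrNN ?mulN1r ?opprK ?mulr1 //.
Qed.

Lemma entryZ (R : numDomainType) m (v : 'rV[R]_m) c e : (c *: v) 0 e = c * v 0 e.
Proof. by rewrite mxE. Qed.
Lemma entryB (R : numDomainType) m (u v : 'rV[R]_m) e : (u - v) 0 e = u 0 e - v 0 e.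
Proof. by rewrite !mxE. Qed.

Definition sgi n (C : {set 'I_n}) (r : 'I_n) : int := if r \in C then 1 else -1.

Lemma sgnE (R : numDomainType) n (C : {set 'I_n}) r : sgn R C r = (sgi C r)%:~R.
Proof. by rewrite /sgn /sgi; case: (r \in C); rewrite ?mulrNz. Qed.

Lemma sgn2 (R : numDomainType) n (C : {set 'I_n}) r : sgn R C r * sgn R C r = 1.
Proof. by rewrite /sgn; case: (r \in C); rewrite ?mulrNN mulr1. Qed.

Lemma dcobL1 (R : numDomainType) n m (hd tl : 'I_m -> 'I_n) (C : {set 'I_n}) r (z : int) :
  dcob hd tl (fun i => ((if rho hd tl C i == r then z else 0)%:~R : R)) =
  z%:~R *: dcob hd tl (chiR R hd tl C r).
Proof.
apply/rowP => e; rewrite entryZ !dcob_entry /chiR mulrBr.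
by do 2 case: (_ == r); rewrite /= ?mulr1 ?mulr0.
Qed.

Lemma dcobL2 (R : numDomainType) n m (hd tl : 'I_m -> 'I_n) (C : {set 'I_n}) r (z : int) :
  dcob hd tl (fun i => ((((i \in C)%:Z - (if rho hd tl C i == r then z else 0))%:~R : R))) =
  dcob hd tl (chi R C) - z%:~R *: dcob hd tl (chiR R hd tl C r).
Proof.
apply/rowP => e; rewrite entryB entryZ !dcob_entry /chiR /chi !intrB mulrBr.
have bz (b : bool) : ((b%:Z)%:~R : R) = b%:R by case: b.
have cz (b : bool) : ((if b then z else 0)%:~R : R) = z%:~R * b%:R.
  by case: b; rewrite ?mulr1 ?mulr0.
rewrite !bz !cz.
set a := _%:R; set b := _%:R; set c := z%:~R * _; set d := z%:~R * _.
rewrite !opprB !addrA; set t := _%:R.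
by rewrite -!addrA; congr (a + _); rewrite addrCA [RHS]addrCA [- c - t]addrC.
Qed.

Lemma constraint (R : realFieldType) n m (hd tl : 'I_m -> 'I_n) (C : {set 'I_n}) r x :
  voronoi hd tl 0 x -> voronoi hd tl (dcob hd tl (chi R C)) x ->
  ip x (dcob hd tl (chiR R hd tl C r)) *+ 2 = sgn R C r * qf (dcob hd tl (chiR R hd tl C r)).
Proof.
move=> [_ V0] [_ VL].
apply: (key_ineq (lam := dcob hd tl (chi R C))).
- exact: sgn2.
- exact: edge_fact.
- have := V0 (fun i => if rho hd tl C i == r then sgi C r else 0).
  by rewrite dcobL1 -sgnE.
- have := VL (fun i => (i \in C)%:Z - (if rho hd tl C i == r then sgi C r else 0)).
  by rewrite dcobL2 -sgnE.
Qed.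

Definition Xm (R : numDomainType) n m (hd tl : 'I_m -> 'I_n) (C : {set 'I_n}) : 'M[R]_n :=
  \matrix_(r, v) chiR R hd tl C r v.

Definition Mm (R : numDomainType) n m (hd tl : 'I_m -> 'I_n) (C : {set 'I_n}) : 'M[R]_(n, m) :=
  Xm R hd tl C *m dmx R hd tl.

Lemma row_Mm (R : numDomainType) n m (hd tl : 'I_m -> 'I_n) (C : {set 'I_n}) r :
  row r (Mm R hd tl C) = dcob hd tl (chiR R hd tl C r).
Proof.
rewrite /Mm row_mul /dcob; congr (_ *m _); apply/rowP => v; by rewrite !mxE.
Qed.

Lemma xMT (R : numDomainType) n m (hd tl : 'I_m -> 'I_n) (C : {set 'I_n}) (x : 'rV[R]_m) r :
  (x *m (Mm R hd tl C)^T) 0 r = ip x (dcob hd tl (chiR R hd tl C r)).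
Proof.
rewrite mxE -row_Mm; apply: eq_bigr => e _; by rewrite !mxE.
Qed.

Lemma I_diff (R : realFieldType) n m (hd tl : 'I_m -> 'I_n) (C : {set 'I_n}) (x y : 'rV[R]_m) :
  voronoi hd tl 0 x -> voronoi hd tl (dcob hd tl (chi R C)) x ->
  voronoi hd tl 0 y -> voronoi hd tl (dcob hd tl (chi R C)) y ->
  (x - y) *m (Mm R hd tl C)^T = 0.
Proof.
move=> Hx1 Hx2 Hy1 Hy2.
rewrite mulmxBl; apply/eqP; rewrite subr_eq0; apply/eqP/rowP => r; rewrite !xMT.
apply/eqP; rewrite -(eqr_pMn2r (isT : (0 < 2)%N)) /=.
by rewrite (constraint _ Hx1 Hx2) (constraint _ Hy1 Hy2).
Qed.
Lemma ker_const (R : numDomainType) n m (hd tl : 'I_m -> 'I_n) (u : 'rV[R]_n) :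
  u *m dmx R hd tl = 0 -> forall v w, connect (adj hd tl) v w -> u 0 v = u 0 w.
Proof.
move=> Hu v w /connectP[p]; elim: p v => [|y p IH] v /=; first by move=> _ ->.
case/andP=> Hvy pp wE; rewrite -(IH y pp wE).
case/existsP: Hvy => e He.
have := congr1 (fun M : 'rV[R]_m => M 0 e) Hu; rewrite mulD_entry mxE => /eqP; rewrite subr_eq0 => /eqP.
by case/orP: He => /andP[/eqP <- /eqP <-].
Qed.

Lemma rank_kerD (R : numFieldType) n m (hd tl : 'I_m -> 'I_n) :
  connectedG hd tl -> (\rank (kermx (dmx R hd tl)) <= 1)%N.
Proof.
move=> Hc.
apply: (leq_trans (mxrankS (_ : (kermx (dmx R hd tl) <= (const_mx 1 : 'rV[R]_n))%MS))).
  apply/row_subP => i; apply/sub_rVP; exists ((row i (kermx (dmx R hd tl))) 0 i).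
  apply/rowP => v; rewrite [RHS]mxE [const_mx 1 0 v]mxE mulr1.
  apply: ker_const (Hc v i); by rewrite -row_mul mulmx_ker row0.
exact: rank_leq_row.
Qed.

Lemma rankX_ge (R : numFieldType) n m (hd tl : 'I_m -> 'I_n) (C : {set 'I_n}) :
  (#|[set v | rho hd tl C v == v]| <= \rank (Xm R hd tl C))%N.
Proof.
set S := [set v | rho hd tl C v == v].
pose Z : 'M[R]_(#|S|, n) := \matrix_(i, r) (r == enum_val i)%:R.
pose Y : 'M[R]_(n, #|S|) := \matrix_(v, j) (v == enum_val j)%:R.
have XY r j : (Xm R hd tl C *m Y) r j = (enum_val j == r)%:R.
  rewrite mxE; under eq_bigr do rewrite !mxE.
  rewrite (sum_delta' (fun v => chiR R hd tl C r v)) /chiR.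
  by have := enum_valP j; rewrite inE => /eqP ->.
have E : Z *m (Xm R hd tl C *m Y) = 1%:M.
  apply/matrixP => i j; rewrite mxE [RHS]mxE.
  under eq_bigr do rewrite XY mxE mulrC.
  by rewrite sum_delta' (inj_eq enum_val_inj) eq_sym.
have := mxrankM_maxr Z (Xm R hd tl C *m Y); rewrite E mxrank1 => H.
exact: leq_trans H (mxrankM_maxl _ _).
Qed.

Lemma rankM_ge (R : numFieldType) n m (hd tl : 'I_m -> 'I_n) (C : {set 'I_n}) :
  connectedG hd tl -> (\rank (Xm R hd tl C) <= \rank (Mm R hd tl C) + 1)%N.
Proof.
move=> Hc; rewrite -(mxrank_mul_ker (Xm R hd tl C) (dmx R hd tl)) leq_add2l.
apply: leq_trans (@rank_kerD R _ _ hd tl Hc); exact: mxrankS (capmxSr _ _).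
Qed.

Lemma gram0 (R : realFieldType) p m (Z : 'M[R]_(p, m)) : Z *m Z^T = 0 -> Z = 0.
Proof.
move=> H; apply/matrixP => i e.
have := congr1 (fun A : 'M[R]_p => A i i) H; rewrite !mxE => Hs.
have : Z i e * Z i e = 0.
  apply: (@psumr_eq0P R _ predT (fun k => Z i k * Z i k)) => //.
    by move=> k _; rewrite -expr2 sqr_ge0.
  by rewrite -[X in _ = X]Hs; apply: eq_bigr => k _; rewrite mxE.
by move/eqP; rewrite mulf_eq0 orbb => /eqP.
Qed.

Lemma rankDMT_ge (R : realFieldType) n m p (X : 'M[R]_(p, n)) (D : 'M[R]_(n, m)) :
  (\rank (X *m D) <= \rank (D *m (X *m D)^T))%N.
Proof.
set M := X *m D.
have sub : (kermx (M *m D^T) <= kermx M)%MS.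
  apply/sub_kermxP; set K := kermx _; apply: gram0.
  have -> : (K *m M) *m (K *m M)^T = (K *m (M *m D^T)) *m (X^T *m K^T).
    by rewrite !trmx_mul /M !mulmxA.
  by rewrite mulmx_ker mul0mx.
have := mxrankS sub; rewrite !mxrank_ker.
have -> : \rank (D *m M^T) = \rank (M *m D^T) by rewrite -mxrank_tr trmx_mul trmxK.
by rewrite leq_sub2lE // rank_leq_row.
Qed.

Lemma pad (R : fieldType) m p (D : 'M[R]_(p, m)) (W0 : 'M[R]_m) t :
  (W0 <= D)%MS -> (\rank W0 <= t)%N -> (t <= \rank D)%N ->
  exists W : 'M[R]_m, [/\ (W0 <= W)%MS, (W <= D)%MS & \rank W = t].
Proof.
move=> sWD h1 h2; have [k Hk] : exists k, (t - \rank W0 = k)%N by eexists.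
elim: k W0 sWD h1 Hk => [|k IH] W0 sWD h1 Hk.
  exists W0; split => //; apply/eqP; rewrite eqn_leq h1 /=.
  by rewrite -subn_eq0 Hk.
have lt : (\rank W0 < t)%N by rewrite -subn_gt0 Hk.
have nDW : ~~ (D <= W0)%MS.
  apply/negP => /mxrankS h; move: (leq_ltn_trans h lt); by rewrite ltnNge h2.
case/row_subPn: nDW => i ni.
set W1 := (W0 + row i D)%MS.
have s01 : (W0 <= W1)%MS by exact: addsmxSl.
have s1D : (W1 <= D)%MS by rewrite addsmx_sub sWD row_sub.
have r1 : \rank W1 = (\rank W0).+1.
  apply/eqP; rewrite eqn_leq; apply/andP; split.
    apply: leq_trans (mxrank_adds_leqif W0 (row i D)) _.
    by rewrite -[(\rank W0).+1]addn1 leq_add2l rank_leq_row.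
  have : (W0 < W1)%MS.
    rewrite ltmxE s01 /=; apply/negP => h; move: ni.
    by rewrite (submx_trans (addsmxSr W0 (row i D)) h).
  by rewrite ltmxErank => /andP[_].
have [||W [s1W sWD' rW]] := IH W1 s1D; [by rewrite r1 | by rewrite r1 subnS Hk |].
by exists W; split => //; exact: submx_trans s01 s1W.
Qed.

Unset Implicit Arguments.

Theorem mainTheorem15 (R : realFieldType) (n m : nat) (hd tl : 'I_m -> 'I_n)
    (C : {set 'I_n}) :
  connectedG hd tl -> C != set0 -> C != setT ->
  let D := dmx R hd tl in
  let lam := dcob hd tl (chi R C) in
  let I := fun x => voronoi hd tl 0 x /\ voronoi hd tl lam x in
  (exists (a : 'rV[R]_m) (W : 'M[R]_m),
      (a <= D)%MS /\ (W <= D)%MS /\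
      (\rank W + cut_rank hd tl C)%N = \rank D /\
      (forall x, I x -> (x - a <= W)%MS)) /\
  (is_face (voronoi hd tl 0) I -> aff_dim (\rank D).-1 I ->
     cut_rank hd tl C = 1%N).
Proof.
move=> Hc C0 CT D lam I.
set X := Xm R hd tl C.
set M := Mm R hd tl C.
set cr := cut_rank hd tl C.
have crE : cr = (#|[set v | rho hd tl C v == v]| - 1)%N by rewrite /cr /cut_rank card_rho.
have crM : (cr <= \rank M)%N.
  rewrite crE leq_subLR addnC.
  exact: leq_trans (rankX_ge R hd tl C) (rankM_ge R C Hc).
have MD : (\rank M <= \rank D)%N by exact: mxrankM_maxr.
set W0 := (D :&: kermx M^T)%MS.
have rW0 : (\rank W0 <= \rank D - cr)%N.
  have := mxrank_mul_ker D M^T; rewrite -/W0 => E.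
  have := rankDMT_ge X D; rewrite -/M => H.
  by rewrite -E addnC -addnBA ?leq_addr //; exact: leq_trans crM H.
have crD : (cr <= \rank D)%N by exact: leq_trans crM MD.
have sW0D : (W0 <= D)%MS by exact: capmxSl.
have [W [sW0W sWD rW]] := pad sW0D rW0 (leq_subr _ _).
have part1 : exists (a : 'rV[R]_m),
    (a <= D)%MS /\ (forall x, I x -> (x - a <= W)%MS).
  have [[x0 Ix0]|nI] := classic (exists x, I x); last first.
    by exists 0; split; [exact: sub0mx | move=> x Ix; case: nI; exists x].
  exists x0; split; first by case: Ix0 => [[]].
  move=> x Ix; apply: submx_trans sW0W; rewrite sub_capmx; apply/andP; split.
    apply: addmx_sub; first by case: Ix => [[]].
    by rewrite -scaleN1r; apply: scalemx_sub; case: Ix0 => [[]].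
  by apply/sub_kermxP; case: Ix => [H1 H2]; case: Ix0 => [H3 H4]; exact: I_diff.
have rWE : (\rank W + cr)%N = \rank D by rewrite rW subnK.
have [a [aD Ha]] := part1.
split; first by exists a, W.
move=> _ [[p0 [Ip0 [P [HP rP]]]] _].
have sPW : (P <= W)%MS.
  apply/row_subP => i.
  have -> : row i P = (p0 + row i P - a) - (p0 - a).
    by rewrite opprB addrA subrK addrAC subrr add0r.
  apply: addmx_sub; first exact: Ha.
  by rewrite -scaleN1r; apply: scalemx_sub; apply: Ha.
have := mxrankS sPW; rewrite rP.
have cr1 : (1 <= cr)%N.
  rewrite /cr /cut_rank.
  have h1 := ncomp_gt0 hd tl C0.
  have h2 : (0 < ncomp_ind hd tl (~: C))%N.
    apply: ncomp_gt0; apply: contraNneq CT => h.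
    by rewrite -(setCK C) h setC0.
  by rewrite subn_gt0; exact: (leq_add h1 h2).
rewrite -rWE -subn1 leq_subLR addnC leq_add2r => crle.
by apply/eqP; rewrite eqn_leq crle cr1.
Qed.
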